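(* Let $\mathbf M$ be an $(N+1,k)$-admissible matrix with characteristic triple $(\mu,\widetilde{\mathbf w},\widetilde{\mathbf z})$, let $h\in(0,1]$ and $\mathbf M^{(h)}:=\mathbf I+h(\mathbf M-\mathbf I)$. Then $\mathbf M^{(h)}$ has characteristic triple $(\mu_h,\widetilde{\mathbf w},\widetilde{\mathbf z})$ with $\mu_h:=1-h(1-\mu)$; in particular $\mathbf M$ and $\mathbf M^{(h)}$ share their characteristic eigenvectors. Moreover, $\mathbf M^{(h)}$ is micro-reversible if and only if $\mathbf M$ is. Finally, if $k=2$ and $\mathbf M$ is a Kimura matrix with fixation probability $\mathbf F$, then so is $\mathbf M^{(h)}$ (with the same $\mathbf F$).
   Context: Column-stochastic matrices. For $1\le k<N-1$, an $(N+1)\times(N+1)$ column-stochastic $\mathbf M$ is $(N+1,k)$-admissible if, after a simultaneous permutation of rows and columns, $\mathbf M=\begin{pmatrix}\widetilde{\mathbf M}&\mathbf 0\\ \mathbf A&\mathbf I\end{pmatrix}$ with $\mathbf I$ the $k\times k$ identity, $\widetilde{\mathbf M}$ irreducible of size $N+1-k$ (the core) and $\mathbf A$ with no zero row. The characteristic triple $(\mu,\widetilde{\mathbf w},\widetilde{\mathbf z})$ is $\mu=\rho(\widetilde{\mathbf M})\in(0,1)$ together with the positive left/right eigenvectors $\widetilde{\mathbf w},\widetilde{\mathbf z}$ of the core for $\mu$, normalised by $\langle\widetilde{\mathbf w},\mathbf 1\rangle=\langle\widetilde{\mathbf w},\widetilde{\mathbf z}\rangle=1$. $\mathbf M$ is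 micro-reversible if $\widetilde w_i\widetilde M_{ij}\widetilde z_j=\widetilde w_j\widetilde M_{ji}\widetilde z_i$ for all $i,j$. An $(N+1,2)$-admissible matrix is called a Kimura matrix; labelling states $0,\dots,N$ with absorbing states $0$ and $N$, its fixation probability is the unique vector $\mathbf F$ with $\mathbf F^\dagger\mathbf M=\mathbf F^\dagger$, $F_0=0$, $F_N=1$. *)

(* Defs.v *)
From HB Require Import structures.
From mathcomp Require Import all_boot all_order all_algebra.
From mathcomp Require Import complex.
Set Implicit Arguments. Unset Strict Implicit. Unset Printing Implicit Defensive.
Import Order.TTheory GRing.Theory Num.Theory.
Local Open Scope ring_scope.

Section Defs.
Variable R : rcfType.

Definition col_stochastic n (M : 'M[R]_n) : Prop :=
  (forall i j, 0 <= M i j) /\ (forall j, \sum_i M i j = 1).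

Definition irreducible_mx n (A : 'M[R]_n) : Prop :=
  forall i j, exists m : nat, 0 < (A ^+ m) i j.

Definition core_mx n (M : 'M[R]_n) (K : {set 'I_n}) : 'M[R]_#|~: K| :=
  \matrix_(i, j) M (enum_val i) (enum_val j).

(* block structure  M = [[Mtilde, 0], [A, I]]  up to simultaneous permutation,
   with absorbing index set K (the identity block), irreducible core
   and A without zero row *)
Definition admissible_struct n (M : 'M[R]_n) (K : {set 'I_n}) : Prop :=
  [/\ col_stochastic M,
      (forall i j, j \in K -> M i j = (i == j)%:R),
      irreducible_mx (core_mx M K)
    & (forall i, i \in K -> exists2 j, j \notin K & M i j != 0)].

Definition admissible (N k : nat) (M : 'M[R]_N.+1) : Prop :=
  exists K : {set 'I_N.+1}, #|K| = k /\ admissible_struct M K.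

Definition cmx n (A : 'M[R]_n) : 'M[R[i]]_n := map_mx (fun x => x%:C%C) A.

Definition spectral_radius n (A : 'M[R]_n) (r : R) : Prop :=
  (exists l : R[i], root (char_poly (cmx A)) l /\ `|l| = r%:C%C) /\
  (forall l : R[i], root (char_poly (cmx A)) l -> `|l| <= r%:C%C).

Definition char_triple n (M : 'M[R]_n) (K : {set 'I_n}) (mu : R)
    (w z : 'cV[R]_#|~: K|) : Prop :=
  [/\ spectral_radius (core_mx M K) mu,
      (forall i, 0 < w i 0) /\ (forall i, 0 < z i 0),
      w^T *m core_mx M K = mu *: w^T,
      core_mx M K *m z = mu *: z
    & \sum_i w i 0 = 1 /\ \sum_i w i 0 * z i 0 = 1].

Definition micro_reversible n (M : 'M[R]_n) (K : {set 'I_n})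
    (w z : 'cV[R]_#|~: K|) : Prop :=
  forall i j, w i 0 * core_mx M K i j * z j 0 = w j 0 * core_mx M K j i * z i 0.

Definition kimura_set (N : nat) : {set 'I_N.+1} := [set ord0; ord_max].

Definition kimura (N : nat) (M : 'M[R]_N.+1) : Prop :=
  #|kimura_set N| = 2%N /\ admissible_struct M (kimura_set N).

Definition fix_eqs (N : nat) (M : 'M[R]_N.+1) (F : 'rV[R]_N.+1) : Prop :=
  [/\ F *m M = F, F 0 ord0 = 0 & F 0 ord_max = 1].

Definition fixation_probability (N : nat) (M : 'M[R]_N.+1) (F : 'rV[R]_N.+1) : Prop :=
  fix_eqs M F /\ (forall G, fix_eqs M G -> G = F).

Definition Mh n (h : R) (M : 'M[R]_n) : 'M[R]_n := 1%:M + h *: (M - 1%:M).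

End Defs.

Arguments char_triple {R n} M K mu w z.
Arguments micro_reversible {R n} M K w z.
Arguments admissible {R} N k M.

(* Main.v *)
Require Import Defs.
From HB Require Import structures.
From mathcomp Require Import all_boot all_order all_algebra.
From mathcomp Require Import complex.
From mathcomp Require Import ring lra.
Import Order.TTheory GRing.Theory Num.Theory.
Local Open Scope ring_scope.

Section L.
Variable R : rcfType.

Lemma coreMh n (M : 'M[R]_n) K h :
  core_mx (Mh h M) K = 1%:M + h *: (core_mx M K - 1%:M).
Proof.
apply/matrixP => i j; rewrite !mxE (inj_eq enum_val_inj) //.
Qed.

Lemma Bentry n (A : 'M[R]_n) h i j :
  (1%:M + h *: (A - 1%:M)) i j = (1 - h) * (i == j)%:R + h * A i j.
Proof. rewrite !mxE; ring. Qed.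

Lemma irr_h n (A : 'M[R]_n) h : 0 < h -> h <= 1 -> (forall i j, 0 <= A i j) ->
  irreducible_mx A -> irreducible_mx (1%:M + h *: (A - 1%:M)).
Proof.
move=> h0 h1 A0 irr.
set B := 1%:M + h *: (A - 1%:M).
have key : forall m i j, 0 <= h ^+ m * (A ^+ m) i j <= (B ^+ m) i j.
  elim=> [|m IH] i j.
    by rewrite !expr0 mul1r !mxE lexx andbT ler0n.
  rewrite !exprS -!mulmxE !mxE mulr_sumr.
  have Hs : forall k, 0 <= h * h ^+ m * (A i k * (A ^+ m) k j) <= B i k * (B ^+ m) k j.
    move=> k; have /andP [a1 a2] := IH k j.
    have hA : 0 <= h * A i k by apply: mulr_ge0; [exact: ltW| exact: A0].
    have hB : h * A i k <= B i k.
      rewrite Bentry lerDr; apply: mulr_ge0; first by rewrite subr_ge0.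
      by rewrite ler0n.
    rewrite (_ : h * h ^+ m * (A i k * (A ^+ m) k j) =
       (h * A i k) * (h ^+ m * (A ^+ m) k j)); last by ring.
    rewrite mulr_ge0 //=.
    apply: (le_trans (ler_wpM2l hA a2)).
    by apply: ler_wpM2r => //; exact: le_trans a1 a2.
  apply/andP; split.
    by apply: sumr_ge0 => k _; have /andP[] := Hs k.
  by apply: ler_sum => k _; have /andP[] := Hs k.
move=> i j; have [m Hm] := irr i j; exists m.
have /andP [_ k2] := key m i j.
apply: lt_le_trans k2; apply: mulr_gt0 => //; exact: exprn_gt0.
Qed.

Local Open Scope complex_scope.
Lemma cmxB n (A:'M[R]_n) h :
  cmx (1%:M + h *: (A - 1%:M)) = 1%:M + h%:C *: (cmx A - 1%:M).
Proof.
apply/matrixP => i j; rewrite !mxE rmorphD rmorphM rmorphB rmorphMn rmorph1 //.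
Qed.

Lemma root_back n (A : 'M[R]_n) h l : 0 < h ->
  root (char_poly (cmx (1%:M + h *: (A - 1%:M)))) l ->
  root (char_poly (cmx A)) ((l - (1-h)%:C) / h%:C).
Proof.
move=> h0; have hne : h%:C != 0 by rewrite -(rmorph0 (real_complex R)) (inj_eq (@complexI R)) gt_eqF.
rewrite -!eigenvalue_root_char cmxB => /eigenvalueP [v Hv v0].
apply/eigenvalueP; exists v => //.
move: Hv; rewrite mulmxDr mulmx1 -scalemxAr mulmxBr mulmx1 => Hv.
have hX : h%:C *: (v *m cmx A) = l *: v - v + h%:C *: v.
  by rewrite -Hv scalerBr [v + _]addrC addrK subrK.
apply: (scalerI hne); rewrite hX scalerA mulrCA divff // mulr1.
rewrite rmorphB rmorph1 scalerBl scalerBl scale1r opprB addrA; exact: addrAC.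
Qed.

Lemma spec_h n (A : 'M[R]_n) h mu (w : 'cV[R]_n) : 0 < h -> h <= 1 ->
  spectral_radius A mu -> \sum_i w i 0 = 1 -> w^T *m A = mu *: w^T ->
  spectral_radius (1%:M + h *: (A - 1%:M)) (1 - h * (1 - mu)).
Proof.
move=> h0 h1 [[l0 [_ Hl0]] Hall] Hs Hw.
have mu0 : 0 <= mu by rewrite -ler0c -Hl0 normr_ge0.
have hmu : 0 <= h * mu by rewrite mulr_ge0 // ltW.
have muh0 : 0 <= 1 - h * (1 - mu) by lra.
have hne : h%:C != 0 by rewrite -(rmorph0 (real_complex R)) (inj_eq (@complexI R)) gt_eqF.
split.
  exists (1 - h * (1 - mu))%:C; split; last by rewrite ger0_norm // ler0c.
  rewrite -eigenvalue_root_char; apply/eigenvalueP.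
  exists (map_mx (real_complex R) w^T).
    have E : w^T *m (1%:M + h *: (A - 1%:M)) = (1 - h * (1 - mu)) *: w^T.
      rewrite mulmxDr mulmx1 -scalemxAr mulmxBr mulmx1 Hw.
      apply/matrixP => i j; rewrite !mxE; ring.
    have -> : cmx (1%:M + h *: (A - 1%:M)) = map_mx (real_complex R) (1%:M + h *: (A - 1%:M)).
      by apply/matrixP => i j; rewrite !mxE.
    rewrite -map_mxM E; apply/matrixP => i j; rewrite !mxE rmorphM //.
  apply/negP => /eqP v0.
  have : \sum_i w i 0 = 0.
    apply: big1 => i _.
    have := congr1 (fun m : 'M[R[i]]_(1, n) => m 0 i) v0; rewrite !mxE => /eqP.
    by rewrite -(rmorph0 (real_complex R)) (inj_eq (@complexI R)) => /eqP.
  by rewrite Hs => /eqP; rewrite oner_eq0.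
move=> l Hl; have := Hall _ (@root_back _ _ _ _ h0 Hl).
set l1 := (l - (1 - h)%:C) / h%:C => Hl1.
have -> : l = (1 - h)%:C + h%:C * l1 by rewrite mulrC divfK // addrC subrK.
apply: (le_trans (ler_normD _ _)); rewrite normrM.
rewrite (ger0_norm (x := (1 - h)%:C)); last by rewrite ler0c subr_ge0.
rewrite (ger0_norm (x := h%:C)); last by rewrite ler0c ltW.
apply: (le_trans (y := (1 - h)%:C + h%:C * mu%:C)).
  by rewrite lerD2l ler_wpM2l // ler0c ltW.
by rewrite -rmorphM -rmorphD lecR le_eqVlt; apply/orP; left; apply/eqP; ring.
Qed.

Local Close Scope complex_scope.
Lemma adm_h n (M : 'M[R]_n) K h : 0 < h -> h <= 1 ->
  admissible_struct M K -> admissible_struct (Mh h M) K.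
Proof.
move=> h0 h1 [[Hnn Hsum] HK Hirr Hrow].
have h1' : 0 <= 1 - h by rewrite subr_ge0.
rewrite /Mh; split.
- split.
    move=> i j; rewrite Bentry addr_ge0 // mulr_ge0 // ?ler0n // ltW //.
  move=> j; under eq_bigr do rewrite Bentry.
  rewrite big_split /= -!mulr_sumr Hsum (bigD1 j) //= eqxx big1; last first.
    by move=> i /negbTE ->.
  by rewrite addr0 mulr1 mulr1 subrK.
- move=> i j Hj; rewrite Bentry HK //; ring.
- rewrite -/(Mh h M) coreMh; apply: irr_h => // i j; rewrite mxE; exact: Hnn.
- move=> i Hi; have [j Hj Hij] := Hrow i Hi; exists j => //.
  have ne : (i == j) = false by apply/eqP => e; move: Hj; rewrite -e Hi.
  by rewrite Bentry ne mulr0 add0r mulf_neq0 // gt_eqF.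
Qed.
End L.

Theorem lemma8 (R : rcfType) (N k : nat) (M : 'M[R]_N.+1) (K : {set 'I_N.+1})
    (mu : R) (w z : 'cV[R]_#|~: K|) (h : R) :
  (1 <= k)%N -> (k < N - 1)%N ->
  #|K| = k -> admissible_struct M K ->
  char_triple M K mu w z ->
  0 < h -> h <= 1 ->
  [/\ admissible_struct (Mh h M) K /\ admissible N k (Mh h M),
      char_triple (Mh h M) K (1 - h * (1 - mu)) w z,
      (micro_reversible (Mh h M) K w z <-> micro_reversible M K w z)
    & (k = 2%N -> K = kimura_set N ->
       forall F : 'rV[R]_N.+1, fixation_probability M F ->
       kimura (Mh h M) /\ fixation_probability (Mh h M) F)].
Proof.
move=> _ _ HK Had [Hsp Hpos Hw Hz Hn] h0 h1.
have hne : h != 0 by rewrite gt_eqF.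
have Had' := @adm_h R _ M K h h0 h1 Had.
split.
- by split => //; exists K.
- split => //.
  + rewrite coreMh; apply: (@spec_h R _ _ h mu w) => //; by case: Hn.
  + rewrite coreMh mulmxDr mulmx1 -scalemxAr mulmxBr mulmx1 Hw.
    by apply/matrixP => i j; rewrite !mxE; ring.
  + rewrite coreMh mulmxDl mul1mx -scalemxAl mulmxBl mul1mx Hz.
    by apply/matrixP => i j; rewrite !mxE; ring.
- rewrite /micro_reversible coreMh.
  have e1 : forall a b c, a * (h * b) * c = h * (a * b * c) by move=> *; ring.
  split => H i j; have := H i j; case: (eqVneq i j) => [->|ne] //;
    rewrite !Bentry (negbTE ne) eq_sym (negbTE ne) !mulr0 !add0r.
    by rewrite !e1 => E; exact: (mulfI hne E).
  by move=> E; rewrite !e1 E.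
- move=> k2 KE F [[HF0 HF1 HF2] Huniq]; split.
    by split; [rewrite -KE HK k2 | rewrite -KE].
  have fixh : forall G : 'rV[R]_N.+1, (G *m Mh h M == G) = (G *m M == G).
    move=> G; rewrite /Mh mulmxDr mulmx1 -scalemxAr mulmxBr mulmx1.
    rewrite -subr_eq0 addrAC subrr add0r scaler_eq0 (negbTE hne) /=.
    by rewrite subr_eq0.
  split.
    by split => //; apply/eqP; rewrite fixh; apply/eqP.
  move=> G [HG0 HG1 HG2]; apply: Huniq; split => //.
  by apply/eqP; rewrite -fixh; apply/eqP.
Qed.
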